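(* Consider a Functional DCOP (as defined in the context) in which every utility function is binary and differentiable. Suppose discrete DPOP is applied to it after discretizing the domains so that, for every utility function $f(x_i, x_{i_1}, \dots, x_{i_k})$ handled by an agent $x_i$ with separator agents $x_{i_1},\dots,x_{i_k}$, the domain of $f$ is partitioned into hypercubes of size $m$ (i.e., the distance between two neighbouring discrete points of the same variable is $m$). Assume that $|\nabla f(v)| \le \delta$ for every utility function $f$ of the problem and every point $v$ of its domain, where for $v=(v_i,v_{i_1},\dots,v_{i_k})$, $$|\nabla f(v)| = \left|\frac{\partial f}{\partial x_i}(v)\right| + \left|\frac{\partial f}{\partial x_{i_1}}(v)\right| + \dots + \left|\frac{\partial f}{\partial x_{i_k}}(v)\right|.$$ Then the error bound of discrete DPOP is $|\mathbf{F}|\, m\, \delta$; that is, the utility $\mathbf{F}$ of the complete solution returned by discrete DPOP is at least $\max_{\mathbf{x}} \mathbf{F}(\mathbf{x}) - |\mathbf{F}|\, m\,\delta$, where $|\mathbf{F}|$ is the number of utility functions.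
   Context: A Functional DCOP (F-DCOP) is a tuple $\langle \mathbf{A}, \mathbf{X}, \mathbf{D}, \mathbf{F}, \alpha\rangle$: $\mathbf{A}$ is a finite set of agents; $\mathbf{X}=\{x_1,\dots,x_n\}$ is a set of continuous decision variables; $\mathbf{D}=\{D_x\}$ where each $x$ takes values in an interval $D_x=[LB_x,UB_x]$; $\mathbf{F}=\{f_1,\dots,f_m\}$ is a set of utility functions, each $f$ defined on $\prod_{x\in \mathrm{scope}(f)} D_x$ with values in $\mathbb{R}\cup\{-\infty\}$; $\alpha:\mathbf{X}\to\mathbf{A}$ maps variables to agents. Each agent controls exactly one variable (agents and variables are identified) and every utility function is binary. The utility of a complete assignment $\mathbf{x}$ is $\mathbf{F}(\mathbf{x})=\sum_{f\in\mathbf{F}} f(\mathbf{x})$, and the goal is to find $\mathbf{x}^*=\arg\max_{\mathbf{x}}\mathbf{F}(\mathbf{x})$. The constraint graph has a node per variable and an edge between two variables sharing a utility function. A pseudo-tree is a rooted spanning tree of the constraint graph (tree edges) such that the two variables of every utility function lie on the same root-to-leaf branch; remaining edges are backedges. The separator of $x_i$ consists of the ancestors of $x_i$ that are connected to $x_i$ or to one of its descendants. Discrete DPOP: after building a pseudo-tree, each variable's domain is replaced by a finite set of discrete points. In the UTIL phase, starting from the leaves, each agent adds the utilities of its functions with its separator and the UTIL tables received from its children, for every combination of discrete values of itself and its separator, then projects out its own variable by maximizing over it, and sends the resulting table (a function of its separator's values) to its parent. In the VALUE phase, starting from the root, each agent picks its best value given the values of its separator and sends the values down to its children. *)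

(* Defs.v *)
From Stdlib Require Import Reals.
From Coquelicot Require Import Coquelicot.
From mathcomp Require Import all_boot.

Set Implicit Arguments.
Unset Strict Implicit.
Unset Printing Implicit Defensive.

Local Open Scope R_scope.

(* Variables are 'I_n, utility functions are indexed by 'I_p.
   Function j is binary with scope (s1 j, s2 j) and value F j (x_{s1 j}) (x_{s2 j}). *)

Definition Rsum (l : seq R) : R := foldr Rplus 0 l.

Definition Rmaxl (l : seq R) : R :=
  match l with [::] => 0 | x :: t => foldr Rmax x t end.

Definition upd (n : nat) (a : 'I_n -> R) (i : 'I_n) (d : R) : 'I_n -> R :=
  fun j => if j == i then d else a j.

Fixpoint iter_par (n : nat) (par : 'I_n -> option 'I_n) (k : nat) (v : 'I_n)
  : option 'I_n :=
  match k with
  | 0 => Some v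
  | k'.+1 => match iter_par par k' v with Some u => par u | None => None end
  end.

Definition is_anc (n : nat) (par : 'I_n -> option 'I_n) (u v : 'I_n) : bool :=
  has (fun k => iter_par par k v == Some u) (iota 1 n).

(* par (the parent map) describes a pseudo-tree of the constraint graph:
   a rooted tree (acyclic, single root) whose edges are edges of the
   constraint graph, and such that the two variables of every utility
   function lie on the same root-to-leaf branch. *)
Definition is_pseudo_tree (n p : nat) (s1 s2 : 'I_p -> 'I_n)
  (par : 'I_n -> option 'I_n) : Prop :=
  (forall i, ~~ is_anc par i i) /\
  (exists r, par r = None /\ forall i, par i = None -> i = r) /\
  (forall c i, par c = Some i ->
     exists j, ((s1 j == i) && (s2 j == c)) || ((s1 j == c) && (s2 j == i))) /\
  (forall j, is_anc par (s1 j) (s2 j) || is_anc par (s2 j) (s1 j)).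

Definition handler (n p : nat) (par : 'I_n -> option 'I_n) (s1 s2 : 'I_p -> 'I_n)
  (j : 'I_p) : 'I_n :=
  if is_anc par (s1 j) (s2 j) then s2 j else s1 j.

Definition grid (n : nat) (LB : 'I_n -> R) (K : 'I_n -> nat) (m : R) (i : 'I_n)
  : seq R :=
  [seq LB i + INR k * m | k <- iota 0 (K i).+1].

Definition local (n p : nat) (F : 'I_p -> R -> R -> R) (s1 s2 : 'I_p -> 'I_n)
  (par : 'I_n -> option 'I_n) (i : 'I_n) (a : 'I_n -> R) : R :=
  Rsum [seq F j (a (s1 j)) (a (s2 j)) | j <- enum 'I_p & handler par s1 s2 j == i].

(* UTIL phase: util k i a is the UTIL message sent by agent i to its parent,
   evaluated at the separator values read from a (k is a recursion budget,
   which is sufficient as soon as it exceeds the height of the subtree of i). *)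
Fixpoint util (n p : nat) (F : 'I_p -> R -> R -> R) (s1 s2 : 'I_p -> 'I_n)
  (par : 'I_n -> option 'I_n) (dom : 'I_n -> seq R) (k : nat) (i : 'I_n)
  (a : 'I_n -> R) : R :=
  match k with
  | 0 => 0
  | k'.+1 =>
      Rmaxl [seq local F s1 s2 par i (upd a i d)
                 + Rsum [seq util F s1 s2 par dom k' c (upd a i d)
                        | c <- enum 'I_n & par c == Some i]
            | d <- dom i]
  end.

Definition agent_val (n p : nat) (F : 'I_p -> R -> R -> R) (s1 s2 : 'I_p -> 'I_n)
  (par : 'I_n -> option 'I_n) (dom : 'I_n -> seq R) (i : 'I_n) (a : 'I_n -> R)
  (d : R) : R :=
  local F s1 s2 par i (upd a i d)
  + Rsum [seq util F s1 s2 par dom n c (upd a i d) | c <- enum 'I_n & par c == Some i].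

(* VALUE phase: xh is a complete solution returned by discrete DPOP
   (for some tie-breaking): every agent takes a discrete value that is best
   given the values chosen by its ancestors. *)
Definition dpop_solution (n p : nat) (F : 'I_p -> R -> R -> R) (s1 s2 : 'I_p -> 'I_n)
  (par : 'I_n -> option 'I_n) (dom : 'I_n -> seq R) (xh : 'I_n -> R) : Prop :=
  forall i, List.In (xh i) (dom i) /\
    agent_val F s1 s2 par dom i xh (xh i)
    = Rmaxl [seq agent_val F s1 s2 par dom i xh d | d <- dom i].

Definition Ftot (n p : nat) (F : 'I_p -> R -> R -> R) (s1 s2 : 'I_p -> 'I_n)
  (x : 'I_n -> R) : R :=
  Rsum [seq F j (x (s1 j)) (x (s2 j)) | j <- enum 'I_p].

(* Main.v *)
Require Import Defs.
From Stdlib Require Import Reals Lra Classical FunctionalExtensionality ClassicalEpsilon.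
From Coquelicot Require Import Coquelicot.
From HB Require Import structures.
From mathcomp Require Import all_boot.
Local Open Scope R_scope.
Set Implicit Arguments.

Lemma RplusA : associative Rplus. Proof. move=> *; ring. Qed.
HB.instance Definition _ := Monoid.isComLaw.Build R 0 Rplus RplusA Rplus_comm Rplus_0_l.

Lemma Rsum_big (T : finType) (P : pred T) (f : T -> R) :
  Rsum [seq f j | j <- enum T & P j] = \big[Rplus/0]_(j | P j) f j.
Proof.
rewrite /Rsum foldrE big_map big_filter big_enum_cond.
by apply: eq_bigl => j.
Qed.

Lemma Rsum_big0 (T : finType) (f : T -> R) :
  Rsum [seq f j | j <- enum T] = \big[Rplus/0]_j f j.
Proof. by rewrite /Rsum foldrE big_map big_enum. Qed.

Lemma Rle_big (T : finType) (P : pred T) (f g : T -> R) :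
  (forall j, P j -> f j <= g j) ->
  \big[Rplus/0]_(j | P j) f j <= \big[Rplus/0]_(j | P j) g j.
Proof.
move=> H; apply: (big_ind2 (fun x y => x <= y)) => //; [lra | move=> *; lra].
Qed.

Lemma Rmaxl_ge (l : seq R) x : List.In x l -> x <= Rmaxl l.
Proof.
case: l => [//|y t] /=.
have H : forall z, z <= foldr Rmax z t.
  elim: t => [|w t IH] z /=; [lra|]. apply: Rle_trans (IH z) _; apply Rmax_r.
move=> [->|]; first exact: H. clear H.
elim: t => [//|w t IH] /= [->|Hx]; first by apply Rmax_l.
apply: Rle_trans (IH Hx) _; apply Rmax_r.
Qed.

Lemma upd_id (n : nat) (a : 'I_n -> R) i : upd a i (a i) = a.
Proof. apply functional_extensionality => j; rewrite /upd; by case: eqP => [->|]. Qed.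

Section Tree.
Variables (n p : nat) (F : 'I_p -> R -> R -> R) (s1 s2 : 'I_p -> 'I_n)
  (par : 'I_n -> option 'I_n) (dom : 'I_n -> seq R).

Lemma iter_parS k v : iter_par par k.+1 v = obind par (iter_par par k v).
Proof. by rewrite /=; case: iter_par. Qed.

Lemma iter_par_add j d v w : iter_par par j v = Some w ->
  iter_par par (j + d) v = iter_par par d w.
Proof.
move=> H; elim: d => [|d IH]; first by rewrite addn0.
by rewrite addnS !iter_parS IH.
Qed.

Lemma iter_par_none j d v : iter_par par j v = None -> iter_par par (j + d) v = None.
Proof.
move=> H; elim: d => [|d IH]; first by rewrite addn0.
by rewrite addnS iter_parS IH.
Qed.

Fixpoint okk (k : nat) (i : 'I_n) : Prop :=
  match k with 0 => False | k'.+1 => forall c, par c = Some i -> okk k' c end.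

Lemma not_okk k i : ~ okk k i -> exists v, iter_par par k v = Some i.
Proof.
elim: k i => [|k IH] i /= H; first by exists i.
have [c [Hc Hn]] : exists c, par c = Some i /\ ~ okk k c.
  apply NNPP => H'; apply H => c Hc; apply NNPP => Hn; apply H'; by exists c.
have [v Hv] := IH c Hn. exists v. by rewrite Hv.
Qed.

Lemma okk_n (Hac : forall i, ~~ is_anc par i i) i : okk n i.
Proof.
apply NNPP => H; have [v Hv] := @not_okk n i H.
pose f := fun j : 'I_n.+1 => odflt i (iter_par par j v).
have Hf : forall j : 'I_n.+1, iter_par par j v = Some (f j).
  move=> j; rewrite /f; case E: (iter_par par j v) => [w|] //=.
  have := @iter_par_none j (n - j) v E; rewrite subnKC ?Hv //.
  by rewrite -ltnS ltn_ord.
have Hni : ~ injective f.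
  move=> Hinj; have := leq_card f Hinj; by rewrite !card_ord ltnn.
have [j1 [j2 [Hfe Hne]]] : exists j1 j2, f j1 = f j2 /\ j1 <> j2.
  apply NNPP => H1; apply Hni => x y Hxy; apply NNPP => Hn; apply H1.
  by exists x, y.
have key : forall (a b : 'I_n.+1), (a < b)%N -> f a = f b -> False.
  move=> a b Hab Hfab.
  have := @iter_par_add a (b - a) v (f a) (Hf a); rewrite subnKC ?(ltnW Hab) // Hf Hfab => E.
  move: (Hac (f b)) => /negP; apply; apply/hasP; exists (b - a)%N.
    rewrite mem_iota subn_gt0 Hab /= add1n ltnS.
    apply: leq_trans (leq_subr _ _) _; by rewrite -ltnS ltn_ord.
  by rewrite E.
case: (ltngtP j1 j2) => [H12|H21|H12]; first exact: key H12 Hfe.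
  exact: key H21 (esym Hfe).
by apply Hne; apply val_inj.
Qed.


Lemma okkS k i : okk k i -> okk k.+1 i.
Proof.
elim: k i => [//|k IH] i /= H c Hc; exact: IH (H c Hc).
Qed.

Lemma util_stab k i a : okk k i ->
  util F s1 s2 par dom k i a = util F s1 s2 par dom k.+1 i a.
Proof.
elim: k i a => [//|k IH] i a /= H.
congr Rmaxl; apply: eq_map => d; congr Rplus; congr Rsum.
apply/eq_in_map => c; rewrite mem_filter => /andP [/eqP Hc _].
exact: IH (H c Hc).
Qed.

Lemma anc_child u c i : par c = Some i -> is_anc par u c -> u = i \/ is_anc par u i.
Proof.
move=> Hc /hasP [k]; rewrite mem_iota => /andP [Hk1 Hk2] /eqP Hk.
case: k Hk1 Hk2 Hk => [//|k] _ Hk2.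
have H1 : iter_par par 1 c = Some i by rewrite /= Hc.
rewrite -add1n (@iter_par_add 1 k c i H1) => Hk.
case: k Hk2 Hk => [|k] Hk2 Hk; first by left; case: Hk.
right; apply/hasP; exists k.+1; last by rewrite Hk.
rewrite mem_iota /=; move: Hk2; rewrite !add1n ltnS; exact: ltnW.
Qed.

Lemma handler_anc j i :
  (forall j, is_anc par (s1 j) (s2 j) || is_anc par (s2 j) (s1 j)) ->
  handler par s1 s2 j = i ->
  (s1 j = i \/ is_anc par (s1 j) i) /\ (s2 j = i \/ is_anc par (s2 j) i).
Proof.
move=> Hpt; rewrite /handler; case E: (is_anc par (s1 j) (s2 j)) => <-.
  by split; [right|left].
split; [left|right] => //. by move: (Hpt j); rewrite E.
Qed.

Lemma util_dep (Hpt : forall j, is_anc par (s1 j) (s2 j) || is_anc par (s2 j) (s1 j))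
  k i a b : (forall u, is_anc par u i -> a u = b u) ->
  util F s1 s2 par dom k i a = util F s1 s2 par dom k i b.
Proof.
elim: k i a b => [//|k IH] i a b Hab /=.
congr Rmaxl; apply: eq_map => d.
have E : forall v, v = i \/ is_anc par v i -> upd a i d v = upd b i d v.
  move=> v Hv; rewrite /upd; case: eqP => // ne.
  case: Hv => [//|]; exact: Hab.
congr Rplus.
  rewrite /local; congr Rsum; apply/eq_in_map => j.
  rewrite mem_filter => /andP [/eqP Hh _].
  have [H1 H2] := @handler_anc j i Hpt Hh.
  by rewrite (E _ H1) (E _ H2).
congr Rsum; apply/eq_in_map => c; rewrite mem_filter => /andP [/eqP Hc _].
apply: IH => u Hu; apply: E; exact: (@anc_child u c i Hc Hu).
Qed.

Lemma root_no_anc r u : par r = None -> ~~ is_anc par u r.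
Proof.
move=> Hr; apply/hasP => [[k]]; rewrite mem_iota => /andP [Hk _].
case: k Hk => [//|k] _.
have : iter_par par k.+1 r = None.
  elim: k => [|k IH]; first by rewrite /= Hr.
  by rewrite iter_parS IH.
by move=> ->.
Qed.

Lemma sum_local a : \big[Rplus/0]_i local F s1 s2 par i a = Ftot F s1 s2 a.
Proof.
rewrite /Ftot Rsum_big0.
under eq_bigr do rewrite /local Rsum_big.
rewrite (exchange_big_dep xpredT) //=.
apply: eq_bigr => j _.
by rewrite (big_pred1 (handler par s1 s2 j)) // => i /=; rewrite eq_sym.
Qed.

Lemma sum_children (g : 'I_n -> R) :
  \big[Rplus/0]_i \big[Rplus/0]_(c | par c == Some i) g c =
  \big[Rplus/0]_(c | par c != None) g c.
Proof.
rewrite (exchange_big_dep xpredT) //= [RHS]big_mkcond.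
apply: eq_bigr => c _.
case: (par c) => [i0|] /=.
  by rewrite (big_pred1 i0).
by rewrite big_pred0.
Qed.

End Tree.

Lemma dpop_opt (n p : nat) (F : 'I_p -> R -> R -> R) (s1 s2 : 'I_p -> 'I_n)
  (par : 'I_n -> option 'I_n) (dom : 'I_n -> seq R) (xh y : 'I_n -> R) :
  is_pseudo_tree s1 s2 par -> (forall i, List.In (y i) (dom i)) ->
  dpop_solution F s1 s2 par dom xh -> Ftot F s1 s2 y <= Ftot F s1 s2 xh.
Proof.
move=> [Hac [[r [Hr Hru]] [_ Hpt]]] Hy Hsol.
have Hstab : forall c a, util F s1 s2 par dom n c a = util F s1 s2 par dom n.+1 c a.
  move=> c a; apply: util_stab; exact: okk_n.
pose U i a := util F s1 s2 par dom n.+1 i a.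
have Hav : forall i a, agent_val F s1 s2 par dom i a (a i) =
    local F s1 s2 par i a + \big[Rplus/0]_(c | par c == Some i) U c a.
  move=> i a; rewrite /agent_val upd_id Rsum_big; congr Rplus.
  apply: eq_bigr => c _; exact: Hstab.
have Hsum : forall a, \big[Rplus/0]_i agent_val F s1 s2 par dom i a (a i) =
    Ftot F s1 s2 a + \big[Rplus/0]_(c | par c != None) U c a.
  move=> a; under eq_bigr do rewrite Hav.
  by rewrite big_split /= sum_local sum_children.
have HU : forall a, \big[Rplus/0]_i U i a =
    U r a + \big[Rplus/0]_(c | par c != None) U c a.
  move=> a; rewrite (bigD1 r) //=; congr Rplus; apply: eq_bigl => c.
  case E: (par c) => [i0|] /=.
    apply/eqP => Ec; move: E; by rewrite Ec Hr.
  apply/negbTE/negP => /eqP; apply; exact: Hru.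
have Hle : Ftot F s1 s2 y <= U r y.
  have H0 : \big[Rplus/0]_i agent_val F s1 s2 par dom i y (y i) <=
            \big[Rplus/0]_i U i y.
    apply: Rle_big => i _; rewrite /U /=; apply: Rmaxl_ge; exact: List.in_map.
  rewrite Hsum HU in H0; lra.
have Heq : Ftot F s1 s2 xh = U r xh.
  have : \big[Rplus/0]_i agent_val F s1 s2 par dom i xh (xh i) =
         \big[Rplus/0]_i U i xh.
    apply: eq_bigr => i _; rewrite (proj2 (Hsol i)) //.
  rewrite Hsum HU; lra.
have Hdep : U r y = U r xh.
  apply: util_dep => // u Hu; exfalso; move: Hu; apply/negP; exact: root_no_anc.
lra.
Qed.

Lemma grid_pt (m t : R) (K : nat) : 0 < m -> 0 <= t <= INR K * m ->
  exists k, (k <= K)%N /\ INR k * m <= t <= INR k * m + m.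
Proof.
move=> Hm; elim: K t => [|K IH] t Ht.
  exists 0%N; split => //; simpl in *; lra.
case: (Rle_lt_dec t (INR K * m)) => H.
  have [k [Hk1 Hk2]] := IH t (conj (proj1 Ht) H).
  exists k; split => //; exact: leqW.
exists K; split => //; rewrite S_INR in Ht; lra.
Qed.

Lemma aff_der (c d t : R) : derivable_pt_lim (fun t => c + t * d) t d.
Proof. apply/is_derive_Reals; auto_derive => //; ring. Qed.

Lemma mvt2 (f : R -> R -> R) (a1 b1 a2 b2 delta m x1 x2 y1 y2 : R) :
  (forall u v, a1 <= u <= b1 -> a2 <= v <= b2 ->
     exists lu lv, differentiable_pt_lim f u v lu lv /\ Rabs lu + Rabs lv <= delta) ->
  a1 <= x1 <= b1 -> a2 <= x2 <= b2 -> a1 <= y1 <= b1 -> a2 <= y2 <= b2 ->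
  Rabs (x1 - y1) <= m -> Rabs (x2 - y2) <= m ->
  f x1 x2 - f y1 y2 <= delta * m.
Proof.
move=> Hd Hx1 Hx2 Hy1 Hy2 Hm1 Hm2.
pose g t := f (y1 + t * (x1 - y1)) (y2 + t * (x2 - y2)).
have Hg : forall t, 0 <= t <= 1 -> exists L, derivable_pt_lim g t L /\ L <= delta * m.
  move=> t Ht.
  have Hu : a1 <= y1 + t * (x1 - y1) <= b1 by split; nra.
  have Hv : a2 <= y2 + t * (x2 - y2) <= b2 by split; nra.
  have [lu [lv [Hdl Hb]]] := Hd _ _ Hu Hv.
  exists (lu * (x1 - y1) + lv * (x2 - y2)); split.
    apply: derivable_pt_lim_comp_2d => //; exact: aff_der.
  have A1 : lu * (x1 - y1) <= Rabs lu * m.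
    apply: Rle_trans (Rle_abs _) _; rewrite Rabs_mult.
    apply: Rmult_le_compat_l => //; exact: Rabs_pos.
  have A2 : lv * (x2 - y2) <= Rabs lv * m.
    apply: Rle_trans (Rle_abs _) _; rewrite Rabs_mult.
    apply: Rmult_le_compat_l => //; exact: Rabs_pos.
  have Hm0 : 0 <= m by apply: Rle_trans (Rabs_pos _) Hm1.
  nra.
have [c [Hc Hc01]] : exists c, g 1 - g 0 = Derive g c * (1 - 0) /\ 0 < c < 1.
  apply: MVT_cor2; first lra.
  move=> c Hc; have [L [HL _]] := Hg c Hc.
  rewrite (is_derive_unique g c L) //; exact/is_derive_Reals.
have [L [HL HLb]] := Hg c (conj (Rlt_le _ _ (proj1 Hc01)) (Rlt_le _ _ (proj2 Hc01))).
rewrite (is_derive_unique g c L) in Hc; last exact/is_derive_Reals.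
move: Hc; rewrite /g.
have -> : y1 + 1 * (x1 - y1) = x1 by ring.
have -> : y2 + 1 * (x2 - y2) = x2 by ring.
have -> : y1 + 0 * (x1 - y1) = y1 by ring.
have -> : y2 + 0 * (x2 - y2) = y2 by ring.
move=> ->; lra.
Qed.

Lemma big_const_R (p : nat) (c : R) : \big[Rplus/0]_(j < p) c = INR p * c.
Proof.
rewrite big_const_ord; elim: p => [|p IH]; first (simpl; ring).
rewrite iterS IH S_INR; ring.
Qed.

Unset Implicit Arguments.

Theorem theorem1 (n p : nat) (LB UB : 'I_n -> R) (F : 'I_p -> R -> R -> R)
  (s1 s2 : 'I_p -> 'I_n) (par : 'I_n -> option 'I_n) (m delta : R)
  (K : 'I_n -> nat) (xh : 'I_n -> R) :
  (forall i, (LB i <= UB i)) ->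
  (forall j, s1 j <> s2 j) ->
  is_pseudo_tree s1 s2 par ->
  (0 < m) ->
  (forall i, UB i = (LB i + INR (K i) * m)) ->
  (forall j u v, (LB (s1 j) <= u <= UB (s1 j)) -> (LB (s2 j) <= v <= UB (s2 j)) ->
     exists lu lv, differentiable_pt_lim (F j) u v lu lv /\
                   (Rabs lu + Rabs lv <= delta)) ->
  dpop_solution F s1 s2 par (grid LB K m) xh ->
  forall x : 'I_n -> R, (forall i, (LB i <= x i <= UB i)) ->
  (Ftot F s1 s2 xh >= Ftot F s1 s2 x - INR p * m * delta).
Proof.
move=> HLU Hs Hpt Hm HUB Hdiff Hsol x Hx.
have Hk : forall i, exists k, (k <= K i)%N /\ INR k * m <= x i - LB i <= INR k * m + m.
  move=> i; apply: grid_pt => //; have := Hx i; rewrite HUB; lra.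
pose kf i := proj1_sig (constructive_indefinite_description _ (Hk i)).
have Hkf : forall i, (kf i <= K i)%N /\ INR (kf i) * m <= x i - LB i <= INR (kf i) * m + m.
  move=> i; exact: (proj2_sig (constructive_indefinite_description _ (Hk i))).
pose y i := LB i + INR (kf i) * m.
have Hyg : forall i, List.In (y i) (grid LB K m i).
  move=> i; rewrite /grid /y. apply (List.in_map (fun k : nat => LB i + INR k * m)). apply/Iter.In_mem.
  rewrite mem_iota /= add0n ltnS; exact: (proj1 (Hkf i)).
have Hyb : forall i, LB i <= y i <= UB i.
  move=> i; rewrite /y HUB.
  have H1 : 0 <= INR (kf i) by apply: pos_INR.
  have H2 : INR (kf i) <= INR (K i) by apply: le_INR; apply/leP; exact: (proj1 (Hkf i)).
  split; nra.
have Hxy : forall i, Rabs (x i - y i) <= m.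
  move=> i; have := proj2 (Hkf i); rewrite /y /Rabs; case: Rcase_abs => _; lra.
have Hdisc : Ftot F s1 s2 x - Ftot F s1 s2 y <= INR p * m * delta.
  rewrite /Ftot !Rsum_big0.
  have H : \big[Rplus/0]_j F j (x (s1 j)) (x (s2 j)) <=
           \big[Rplus/0]_j (F j (y (s1 j)) (y (s2 j)) + m * delta).
    apply: Rle_big => j _.
    have := mvt2 (Hdiff j) (Hx (s1 j)) (Hx (s2 j)) (Hyb (s1 j)) (Hyb (s2 j))
                 (Hxy (s1 j)) (Hxy (s2 j)).
    lra.
  move: H; rewrite big_split big_const_R /= -Rmult_assoc; lra.
have := @dpop_opt n p F s1 s2 par (grid LB K m) xh y Hpt Hyg Hsol.
lra.
Qed.
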